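(* Let $G$ be a finite group and let $M,N_1,N_2$ be normal subgroups of $G$. If $(G,N_1,M)$ and $(G,N_2,M)$ are Camina triples, then $(G,N_1\cap N_2,M)$ is a Camina triple.
   Context: For normal subgroups $M,N$ of a finite group $G$, $(G,N,M)$ is a Camina triple if $1<M\le N<G$ and every $g\in G\setminus N$ is conjugate in $G$ to every element of the coset $gM$. *)

(* Defs.v *)
From mathcomp Require Import all_boot all_fingroup.
Set Implicit Arguments. Unset Strict Implicit. Unset Printing Implicit Defensive.
Local Open Scope group_scope.

Definition camina_triple (gT : finGroupType) (G N M : {group gT}) : Prop :=
  [/\ M <| G, N <| G, [1] \proper M, M \subset N /\ N \proper G &
      (forall g, g \in G :\: N -> forall m, m \in M -> g * m \in g ^: G)].

(* Main.v *)
Require Import Defs.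
From mathcomp Require Import all_boot all_fingroup.
Local Open Scope group_scope.

Theorem mainTheorem7 (gT : finGroupType) (G M N1 N2 : {group gT}) :
  M <| G -> N1 <| G -> N2 <| G ->
  camina_triple G N1 M -> camina_triple G N2 M ->
  camina_triple G (N1 :&: N2)%G M.
Proof.
move=> nMG nN1 nN2 [_ _ M1 [sMN1 pN1] H1] [_ _ _ [sMN2 pN2] H2].
split => //.
- exact: normalI.
- split; first by rewrite subsetI sMN1.
  apply: sub_proper_trans pN1; exact: subsetIl.
- move=> g; rewrite !inE negb_and => /andP[/orP[g1|g2] gG] m mM.
  + by apply: H1 => //; rewrite inE g1.
  + by apply: H2 => //; rewrite inE g2.
Qed.
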